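(* Let $\Gamma$ be a connected $\mathbb Z$-leg-weighted graph with edge set $E$, and let $w_1,w_2\in W(\Gamma)$ be two weightings. Then $c_{w_1}\cap c_{w_2}$ is a face of $c_{w_1}$.
   Context: A graph consists of a finite set $V$ of vertices, a finite set $H$ of half-edges, a map $\mathrm{end}\colon H\to V$, an involution $i$ of $H$, a genus function $g\colon V\to\mathbb Z_{\ge0}$ and an integer twist $k$. Legs are fixed points of $i$; edges are pairs $\{h,i(h)\}$ with $h\ne i(h)$; a directed edge is a non-leg half-edge $h$, with source $\mathrm{end}(h)$ and target $\mathrm{end}(i(h))$. The valence of $v$ is the number of non-leg half-edges at $v$, and $\kappa(v)=2g(v)-2+\mathrm{val}(v)$; $g(\Gamma)$ is the first Betti number plus $\sum_v g(v)$. A cycle is a closed walk of directed edges (target of each is the source of the next) repeating no vertex or undirected edge. A weighting is a function $w\colon H\to\mathbb Z$ with $w(h)+w(i(h))=0$ whenever $h\neq i(h)$, and $\sum_{\mathrm{end}(h)=v}w(h)+k\kappa(v)=0$ for every vertex $v$. A leg-weighted graph is a graph with a function from legs to $\mathbb Z$ summing to $-k(2g(\Gamma)-2)$; $W(\Gamma)$ is the set of weightings restricting to the given leg values. For a directed edge $e$ in a cycle $\gamma$, $w_\gamma(e)$ is the value of $w$ on the half-edge of $e$ at its source (in the direction of $\gamma$). A thickness $t\in\mathbb Q_{\ge0}^E$ is compatible with $w$ if $\sum_{e\in\gamma}w_\gamma(e)t(e)=0$ for every cycle $\gamma$; $c_w\subseteq\mathbb Q_{\ge0}^E$ is the rational polyhedral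 cone of thicknesses compatible with $w$. *)

(* Defs.v *)
From HB Require Import structures.
From mathcomp Require Import all_boot all_order all_algebra.
Set Implicit Arguments. Unset Strict Implicit. Unset Printing Implicit Defensive.
Import Order.TTheory GRing.Theory Num.Theory.
Local Open Scope ring_scope.

Record graph := Graph {
  gV : finType;
  gH : finType;
  gend : gH -> gV;
  ginv : gH -> gH;
  ginvK : involutive ginv;
  ggen : gV -> nat;
  gtwist : int }.

Section GraphDefs.
Variable G : graph.
Local Notation V := (gV G).
Local Notation H := (gH G).
Local Notation i := (@ginv G).
Local Notation endv := (@gend G).
Local Notation k := (@gtwist G).

Definition is_leg (h : H) : bool := i h == h.

Definition is_edge (e : {set H}) : bool :=
  [exists h, ~~ is_leg h && (e == [set h; i h])].
Definition edge : Type := {e : {set H} | is_edge e}.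

(* the undirected edge underlying a half-edge (None for legs) *)
Definition edge_of (h : H) : option edge := insub [set h; i h].

Definition valence (v : V) : nat := #|[set h : H | (endv h == v) && ~~ is_leg h]|.
Definition kappa (v : V) : int := 2 * (@ggen G v)%:Z - 2 + (valence v)%:Z.

Definition adj : rel V :=
  fun u v => [exists h, [&& ~~ is_leg h, endv h == u & endv (i h) == v]].
Definition connected_graph : Prop := forall u v : V, connect adj u v.

Definition ncomp : nat := #|[set fingraph.root adj v | v : V]|.
Definition betti1 : int := (#|{: edge}|)%:Z - (#|{: V}|)%:Z + (ncomp)%:Z.
Definition genus : int := betti1 + (\sum_(v : V) @ggen G v)%:Z.

Definition is_weighting (w : H -> int) : Prop :=
  (forall h, ~~ is_leg h -> w h + w (i h) = 0) /\
  (forall v : V, \sum_(h : H | endv h == v) w h + k * kappa v = 0).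

(* leg weights (values of l on non-legs are irrelevant) *)
Definition leg_weighting (l : H -> int) : Prop :=
  \sum_(h : H | is_leg h) l h = - (k * (2 * genus - 2)).

Definition in_W (l : H -> int) (w : H -> int) : Prop :=
  is_weighting w /\ (forall h, is_leg h -> w h = l h).

Definition is_cycle (c : seq H) : bool :=
  [&& c != [::], all (fun h => ~~ is_leg h) c,
      cycle (fun h h' => endv (i h) == endv h') c,
      uniq (map endv c) & uniq (map (fun h => [set h; i h]) c)].

Definition tval (t : {ffun edge -> rat}) (h : H) : rat :=
  if edge_of h is Some e then t e else 0.

Definition compatible (w : H -> int) (t : {ffun edge -> rat}) : Prop :=
  forall c, is_cycle c -> \sum_(h <- c) (w h)%:~R * tval t h = 0.

Definition cone_w (w : H -> int) (t : {ffun edge -> rat}) : Prop :=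
  (forall e, 0 <= t e) /\ compatible w t.

End GraphDefs.

Definition is_face (X : finType) (F C : {ffun X -> rat} -> Prop) : Prop :=
  exists l : {ffun X -> rat},
    (forall t, C t -> 0 <= \sum_(x : X) l x * t x) /\
    (forall t, F t <-> (C t /\ \sum_(x : X) l x * t x = 0)).

(* Main.v *)
Require Import Defs.
From HB Require Import structures.
From mathcomp Require Import all_boot all_order all_algebra.
From mathcomp Require Import zify.
Set Implicit Arguments. Unset Strict Implicit. Unset Printing Implicit Defensive.
Import Order.TTheory GRing.Theory Num.Theory.

Section Flow.
Local Open Scope ring_scope.
Variable G : graph.
Variable d : gH G -> int.
Hypothesis dN : forall h, d (ginv h) = - d h.
Hypothesis dC : forall v, \sum_(h | gend h == v) d h = 0.

Definition pos : rel (gV G) :=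
  fun u v => [exists h, [&& 0 < d h, gend h == u & gend (ginv h) == v]].

Lemma dpos_nonleg h : 0 < d h -> ~~ is_leg h.
Proof.
move=> dh; apply/negP => /eqP e; have := dN h; rewrite e; lia.
Qed.

Lemma reach h0 : 0 < d h0 -> connect pos (gend (ginv h0)) (gend h0).
Proof.
move=> dh0; apply/negPn/negP => nc.
set x := gend (ginv h0) in nc *.
pose R := [set v | connect pos x v].
have S0 : \sum_(h | gend h \in R) d h = 0.
  rewrite (partition_big (fun h => gend h) (mem R)) //=.
  apply: big1 => v vR; rewrite -[RHS](dC v); apply: eq_bigl => h.
  by case: (gend h =P v) => [->|_]; rewrite ?vR ?andbF.
rewrite (bigID (fun h => gend (ginv h) \in R)) /= in S0.
have S1 : \sum_(h | (gend h \in R) && (gend (ginv h) \in R)) d h = 0.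
  set S := (X in X = 0).
  have : S = - S.
    rewrite {1}/S (reindex_inj (inv_inj (@ginvK G))) /= -sumrN.
    by apply: eq_big => h; [rewrite ginvK andbC | rewrite dN].
  lia.
rewrite S1 add0r in S0.
have hin : (gend (ginv h0) \in R) && (gend (ginv (ginv h0)) \notin R).
  by rewrite ginvK !inE connect0.
rewrite (bigD1 (ginv h0)) //= in S0.
have : \sum_(h | ((gend h \in R) && (gend (ginv h) \notin R)) && (h != ginv h0)) d h <= 0.
  apply: sumr_le0 => h /andP[/andP[hR hnR] _].
  rewrite leNgt; apply/negP => dh; apply: (negP hnR).
  rewrite inE in hR; rewrite inE; apply: connect_trans hR (connect1 _).
  by apply/existsP; exists h; rewrite dh !eqxx.
rewrite dN in S0; rewrite -(lerD2l (- d h0)) S0 addr0; lia.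
Qed.

Lemma lift vs : forall x, path pos x vs -> exists p : seq (gH G),
  [/\ all (fun h => 0 < d h) p, map (@gend G) p = belast x vs &
   forall h z, gend (ginv h) = x -> gend z = last x vs ->
     path (fun a b => gend (ginv a) == gend b) h (rcons p z)].
Proof.
elim: vs => [|v vs IH] x /=.
  by move=> _; exists [::]; split => // h z hx zl; rewrite /= hx zl eqxx.
case/andP => /existsP[h1 /and3P[dh1 /eqP e1 /eqP e2]] pv.
have [p [ap mp pp]] := IH v pv.
exists (h1 :: p); split => /=; first by rewrite dh1 ap.
  by rewrite mp e1.
move=> h z hx zl; rewrite hx e1 eqxx /=; exact: pp.
Qed.

Lemma uniq_edges (c : seq (gH G)) : all (fun h => 0 < d h) c ->
  uniq (map (@gend G) c) -> uniq (map (fun h => [set h; ginv h]) c).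
Proof.
move=> ac uc; rewrite map_inj_in_uniq; first exact: map_uniq uc.
move=> a b ain bin eab.
have : b \in [set a; ginv a] by rewrite eab set21.
rewrite !inE => /orP[/eqP //| /eqP eb]; exfalso.
have da := allP ac a ain; have db := allP ac b bin.
rewrite eb dN in db; lia.
Qed.

Lemma pos_cycle h0 : 0 < d h0 ->
  exists c, [/\ is_cycle c, h0 \in c & all (fun h => 0 < d h) c].
Proof.
move=> dh0; have := reach dh0; case/connectP => vs pvs ey.
move: ey; case: (shortenP pvs) => vs' pvs' uvs' _ ey.
have [p [ap mp pp]] := lift pvs'.
have ac : all (fun h => 0 < d h) (h0 :: p) by rewrite /= dh0 ap.
have um : uniq (map (@gend G) (h0 :: p)).
  by rewrite /= mp ey; move: uvs'; rewrite lastI rcons_uniq.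
exists (h0 :: p); split => //; last by rewrite mem_head.
apply/and5P; split => //.
- by apply: sub_all ac => h; exact: dpos_nonleg.
- by apply: pp.
- exact: uniq_edges.
Qed.

End Flow.

Section Main.
Local Open Scope ring_scope.

Lemma edge_mem (G : graph) (e : edge G) h : h \in sval e -> ginv h \in sval e.
Proof.
case: e => s /= /existsP[h' /andP[_ /eqP ->]].
by rewrite !inE => /orP[/eqP ->|/eqP ->]; rewrite ?ginvK eqxx ?orbT.
Qed.

Lemma edge_of_mem (G : graph) (e : edge G) h : h \in sval e -> edge_of h = Some e.
Proof.
case: e => s es /= hs; rewrite /edge_of.
have -> : [set h; ginv h] = s.
  move: (es) hs => /existsP[h' /andP[_ /eqP ->]].
  rewrite !inE => /orP[/eqP ->|/eqP ->]; first by [].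
  by rewrite ginvK setUC.
case: insubP => [u _ vu|]; last by rewrite es.
by congr Some; apply: val_inj.
Qed.

Lemma edge_of_some (G : graph) (h : gH G) e : edge_of h = Some e -> h \in sval e.
Proof.
rewrite /edge_of; case: insubP => // u _ vu [<-]; by rewrite vu set21.
Qed.

Lemma tval_ge0 (G : graph) (t : {ffun edge G -> rat}) (h : gH G) :
  (forall e, 0 <= t e) -> 0 <= Defs.tval t h.
Proof. by move=> t0; rewrite /Defs.tval; case: (edge_of h). Qed.

End Main.

Local Open Scope ring_scope.
Theorem lemma3p6 (G : graph) (l : gH G -> int) :
  connected_graph G -> leg_weighting l ->
  forall w1 w2 : gH G -> int, in_W l w1 -> in_W l w2 ->
  is_face (fun t => cone_w w1 t /\ cone_w w2 t) (cone_w w1).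
Proof.
move=> _ _ w1 w2 [[A1 V1] L1] [[A2 V2] L2].
pose d h := w1 h - w2 h.
have dN : forall h, d (ginv h) = - d h.
  move=> h; rewrite /d; case: (boolP (is_leg h)) => hl.
    by have e := eqP hl; rewrite e L1 // L2 // subrr oppr0.
  have := A1 h hl; have := A2 h hl; lia.
have dC : forall v, \sum_(h | gend h == v) d h = 0.
  move=> v; rewrite /d sumrB; move: (V1 v) (V2 v).
  set a := \sum_(h | _) w1 h; set b := \sum_(h | _) w2 h.
  set c := (_ * _)%R; lia.
pose L : {ffun edge G -> rat} :=
  [ffun e : edge G => \sum_(h in sval e) ((d h)%:~R : rat) ^+ 2].
have Lge0 : forall e, 0 <= L e by move=> e; rewrite ffunE sumr_ge0 // => h _; exact: sqr_ge0.
exists L; split.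
  move=> t [t0 _]; apply: sumr_ge0 => e _; exact: mulr_ge0.
move=> t; split.
- move=> [[t0 c1] [_ c2]]; split; first by split.
  apply: big1 => e _; apply/eqP; rewrite mulf_eq0; apply/negPn/negP.
  rewrite negb_or => /andP[Ln tn].
  have [h he dh] : exists2 h, h \in sval e & d h != 0.
    case: (pickP (fun h => (h \in sval e) && (d h != 0))) => [h /andP[he dh]|none].
      by exists h.
    exfalso; move/negP: Ln; apply; rewrite ffunE big1 // => h he.
    have := none h; rewrite he /= => /negbFE/eqP ->; by rewrite expr2 mulr0.
  have [h1 h1e dh1] : exists2 h1, h1 \in sval e & 0 < d h1.
    case: (ltP 0 (d h)) => [dp|dn]; first by exists h.
    exists (ginv h); first exact: edge_mem.
    rewrite dN; move: dh dn; lia.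
  have [c [cc h1c ac]] := pos_cycle dN dC dh1.
  have := c1 c cc; have := c2 c cc => s2 s1.
  have : \sum_(h <- c) (d h)%:~R * Defs.tval t h = 0.
    rewrite /d; under eq_bigr do rewrite intrB mulrBl.
    by rewrite sumrB s1 s2 subr0.
  rewrite (big_rem h1) //= {1}/Defs.tval (edge_of_mem h1e) big_seq => /eqP.
  apply/negP; rewrite gt_eqF // ltr_pwDl //.
    by rewrite mulr_gt0 // ?ltr0z // lt0r tn t0.
  apply: sumr_ge0 => h2 /mem_rem hc; apply: mulr_ge0; last exact: tval_ge0.
  by rewrite ler0z; apply: ltW; exact: (allP ac).
- move=> [[t0 c1] s0]; split; first by split.
  split; first by [].
  have z : forall e, L e * t e = 0.
    move=> e; apply: (psumr_eq0P _ s0) => // e' _; exact: mulr_ge0.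
  have dz : forall h, (d h)%:~R * Defs.tval t h = 0.
    move=> h; rewrite /Defs.tval; case E: (edge_of h) => [e|]; last by rewrite mulr0.
    have he := edge_of_some E.
    have /eqP := z e; rewrite mulf_eq0 => /orP[/eqP|/eqP ->]; last by rewrite mulr0.
    rewrite ffunE => /psumr_eq0P => /(_ (fun _ _ => sqr_ge0 _)) /(_ h he) /eqP.
    by rewrite sqrf_eq0 => /eqP ->; rewrite mul0r.
  move=> c cc; rewrite -[RHS](c1 c cc); apply: eq_bigr => h _.
  have := dz h; rewrite /d intrB mulrBl => /eqP; rewrite subr_eq0 => /eqP ->; done.
Qed.
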